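(* A map $\operatorname{z}\colon\operatorname{Conv}(\mathbb{R}^n;\mathbb{R})\to\mathbb{R}^n$ is a continuous, dually translation covariant, vertically translation invariant valuation that is homogeneous of degree $0$ if and only if there exists $t\in\mathbb{R}^n$ such that $\operatorname{z}(v)=t$ for every $v\in\operatorname{Conv}(\mathbb{R}^n;\mathbb{R})$. For $n\geq2$, such a $\operatorname{z}$ is in addition rotation equivariant if and only if $\operatorname{z}\equiv o$. For $n=1$, the same holds with rotation equivariance replaced by reflection equivariance ($\operatorname{z}(v(-\,\cdot))=-\operatorname{z}(v)$).
   Context: $\operatorname{Conv}(\mathbb{R}^n;\mathbb{R})$: convex functions $\mathbb{R}^n\to\mathbb{R}$ with the topology of pointwise convergence. Valuation: $\operatorname{z}(v\vee w)+\operatorname{z}(v\wedge w)=\operatorname{z}(v)+\operatorname{z}(w)$ whenever $v,w,v\vee w,v\wedge w$ are in the space. Dually translation covariant: there is $\operatorname{z}^0$ with $\operatorname{z}(v+\langle x,\cdot\rangle)=\operatorname{z}(v)+\operatorname{z}^0(v)x$. Vertically translation invariant: $\operatorname{z}(v+c)=\operatorname{z}(v)$ for $c\in\mathbb{R}$. Homogeneous of degree $s$: $\operatorname{z}(\lambda v)=\lambda^s\operatorname{z}(v)$ for $\lambda>0$. Rotation equivariant: $\operatorname{z}(v\circ\vartheta^{-1})=\vartheta\operatorname{z}(v)$ for $\vartheta\in\operatorname{SO}(n)$. $o$ denotes the origin. *)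

(* Defs.v *)
From HB Require Import structures.
From mathcomp Require Import all_boot all_order all_algebra.
From mathcomp Require Import all_classical all_reals all_analysis.
Set Implicit Arguments. Unset Strict Implicit. Unset Printing Implicit Defensive.
Import Order.TTheory GRing.Theory Num.Theory.
Import numFieldNormedType.Exports.
Local Open Scope ring_scope.
Local Open Scope classical_set_scope.

Definition convex_fun (R : realType) (n : nat) (v : 'rV[R]_n -> R) : Prop :=
  forall (x y : 'rV[R]_n) (t : R), 0 <= t <= 1 ->
    v ((1 - t) *: x + t *: y) <= (1 - t) * v x + t * v y.

Definition Conv (R : realType) (n : nat) : set {ptws 'rV[R]_n -> R} :=
  [set v | convex_fun v].

Definition inner (R : realType) (n : nat) (x y : 'rV[R]_n) : R :=
  \sum_(i < n) x ord0 i * y ord0 i.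

Definition fmax (R : realType) (n : nat) (v w : 'rV[R]_n -> R) :=
  fun x => Num.max (v x) (w x).
Definition fmin (R : realType) (n : nat) (v w : 'rV[R]_n -> R) :=
  fun x => Num.min (v x) (w x).

Definition is_valuation (R : realType) (n : nat)
    (z : ({ptws 'rV[R]_n -> R}) -> 'rV[R]_n) : Prop :=
  forall v w : 'rV[R]_n -> R,
    convex_fun v -> convex_fun w ->
    convex_fun (fmax v w) -> convex_fun (fmin v w) ->
    z (fmax v w) + z (fmin v w) = z v + z w.

Definition is_continuous_on_Conv (R : realType) (n : nat)
    (z : ({ptws 'rV[R]_n -> R}) -> 'rV[R]_n) : Prop :=
  {within @Conv R n, continuous z}.

Definition dually_translation_covariant (R : realType) (n : nat)
    (z : ({ptws 'rV[R]_n -> R}) -> 'rV[R]_n) : Prop :=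
  exists z0 : ('rV[R]_n -> R) -> R,
    forall (v : 'rV[R]_n -> R) (x : 'rV[R]_n), convex_fun v ->
      z (fun y => v y + inner x y) = z v + z0 v *: x.

Definition vertically_translation_invariant (R : realType) (n : nat)
    (z : ({ptws 'rV[R]_n -> R}) -> 'rV[R]_n) : Prop :=
  forall (v : 'rV[R]_n -> R) (c : R), convex_fun v ->
    z (fun y => v y + c) = z v.

Definition homogeneous0 (R : realType) (n : nat)
    (z : ({ptws 'rV[R]_n -> R}) -> 'rV[R]_n) : Prop :=
  forall (v : 'rV[R]_n -> R) (lambda : R), convex_fun v -> 0 < lambda ->
    z (fun y => lambda * v y) = z v.

(* SO(n): orthogonal matrices of determinant 1.  A matrix th acts on a
   (row) vector x as th x := x *m th^T. *)
Definition is_rotation (R : realType) (n : nat) (th : 'M[R]_n) : Prop :=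
  th *m th^T = 1%:M /\ \det th = 1.

Definition rotation_equivariant (R : realType) (n : nat)
    (z : ({ptws 'rV[R]_n -> R}) -> 'rV[R]_n) : Prop :=
  forall (v : 'rV[R]_n -> R) (th : 'M[R]_n), convex_fun v -> is_rotation th ->
    (* v o th^{-1} : x |-> v (th^{-1} x) = v (x *m (th^{-1})^T) = v (x *m th) *)
    z (fun x => v (x *m th)) = z v *m th^T.

Definition reflection_equivariant (R : realType) (n : nat)
    (z : ({ptws 'rV[R]_n -> R}) -> 'rV[R]_n) : Prop :=
  forall v : 'rV[R]_n -> R, convex_fun v ->
    z (fun x => v (- x)) = - z v.

(* Main.v *)
Require Import Defs.
From HB Require Import structures.
From mathcomp Require Import all_boot all_order all_algebra.
From mathcomp Require Import all_classical all_reals all_analysis.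
Import Order.TTheory GRing.Theory Num.Theory.
Import numFieldNormedType.Exports.
Local Open Scope ring_scope.
Local Open Scope classical_set_scope.
From mathcomp Require Import ring lra.

Lemma const0 (R : realType) (n : nat) (z : ({ptws 'rV[R]_n -> R}) -> 'rV[R]_n) :
  is_continuous_on_Conv z -> homogeneous0 z ->
  forall v, convex_fun v -> z v = z (fun _ => 0).
Proof.
move=> zc zh v cv.
have c0 : convex_fun (fun _ : 'rV[R]_n => (0:R)).
  by move=> x y t _; rewrite !mulr0 addr0.
have cl : forall l, convex_fun (fun y => l * v y) -> True by [].
set g := fun l : R => (fun y => l * v y) : {ptws 'rV[R]_n -> R}.
have gc : forall l, 0 < l -> Conv (g l).
  move=> l l0 x y t t01; rewrite /g.
  rewrite /= mulrCA (mulrCA t) -mulrDr; apply: ler_wpM2l; [exact: ltW | exact: cv].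
have gcvg : g @ 0^'+ --> ((fun _ => 0 : R) : {ptws 'rV[R]_n -> R}).
  apply/pointwise_cvgP => t.
  have h : (fun l : R => l * v t) @ 0^'+ --> (0:R).
    rewrite -[X in _ --> X](mul0r (v t)); apply: cvgMl; exact: cvg_at_right_filter.
  exact: h.
have gsub : g @ 0^'+ --> ((fun _ => 0 : R) : subspace (@Conv R n)).
  move=> W; rewrite /nbhs /= -(@nbhs_subspace_in _ (@Conv R n)) //.
  move=> hW; have := gcvg _ hW; rewrite /= nbhs_simpl => hN.
  have hN' : 0^'+ (fun l : R => Conv (g l) -> W (g l)) := hN.
  apply: filterS2 hN' (@nbhs_right_gt R 0) => l h l0; apply: h; exact: gc.
have hz := cvg_comp g (from_subspace (@Conv R n) z) gsub (zc (fun _ => 0 : R)).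
have hz2 : (from_subspace (@Conv R n) z \o g) @ 0^'+ --> z v.
  apply: cvg_near_cst; apply: filterS (@nbhs_right_gt R 0) => l l0 /=.
  exact: zh.
exact: (cvg_unique _ hz2 hz).
Qed.

Lemma inner_lin (R : realType) (n : nat) (x a b : 'rV[R]_n) (t : R) :
  inner x ((1 - t) *: a + t *: b) = (1 - t) * inner x a + t * inner x b.
Proof.
rewrite /inner !mulr_sumr -big_split /=; apply: eq_bigr => i _.
rewrite !mxE; ring.
Qed.

Lemma convex_add_inner (R : realType) (n : nat) (v : 'rV[R]_n -> R) x :
  convex_fun v -> convex_fun (fun y => v y + inner x y).
Proof.
move=> cv a b t t01; rewrite inner_lin; have := cv a b t t01; lra.
Qed.

Lemma convex_addc (R : realType) (n : nat) (v : 'rV[R]_n -> R) c :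
  convex_fun v -> convex_fun (fun y => v y + c).
Proof. move=> cv a b t t01; have := cv a b t t01; lra. Qed.

Lemma convex_scale (R : realType) (n : nat) (v : 'rV[R]_n -> R) l :
  convex_fun v -> 0 < l -> convex_fun (fun y => l * v y).
Proof.
move=> cv l0 x y t t01.
rewrite /= mulrCA (mulrCA t) -mulrDr; apply: ler_wpM2l; [exact: ltW | exact: cv].
Qed.

Lemma convex_lin (R : realType) (n : nat) (v : 'rV[R]_n -> R) (th : 'M[R]_n) :
  convex_fun v -> convex_fun (fun x => v (x *m th)).
Proof.
move=> cv x y t t01; rewrite mulmxDl -!scalemxAl; exact: cv.
Qed.

Lemma convex_neg (R : realType) (n : nat) (v : 'rV[R]_n -> R) :
  convex_fun v -> convex_fun (fun x => v (- x)).
Proof.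
move=> cv x y t t01; rewrite opprD -!scalerN; exact: cv.
Qed.

Lemma convex0 (R : realType) (n : nat) : convex_fun (fun _ : 'rV[R]_n => (0:R)).
Proof. by move=> x y t _; rewrite !mulr0 addr0. Qed.

Lemma part1 (R : realType) (n : nat) (z : ({ptws 'rV[R]_n -> R}) -> 'rV[R]_n) :
  ((is_continuous_on_Conv z /\ dually_translation_covariant z /\
    vertically_translation_invariant z /\ is_valuation z /\ homogeneous0 z)
   <-> exists t : 'rV[R]_n, forall v, convex_fun v -> z v = t).
Proof.
split.
  move=> [zc [_ [_ [_ zh]]]]; exists (z (fun _ => 0)); exact: const0.
move=> [t zt]; split.
  move=> x; apply: cvg_near_cst.
  rewrite /nbhs /= /nbhs_subspace; case: ifP => cx.
    have cx' : convex_fun x by rewrite inE in cx.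
    have h : forall y : {ptws 'rV[R]_n -> R}, Conv y -> from_subspace (@Conv R n) z y = from_subspace (@Conv R n) z x.
      move=> y cy; rewrite /from_subspace (zt y cy) (zt x cx') //.
    exact: (@filterE _ (nbhs (x : {ptws 'rV[R]_n -> R})) _ _ h).
  move=> y /= yx; rewrite yx; reflexivity.
split.
  by exists (fun _ => 0) => v x cv; rewrite scale0r addr0 !zt //; exact: convex_add_inner.
split.
  by move=> v c cv; rewrite !zt //; exact: convex_addc.
split.
  by move=> v w cv cw cM cm; rewrite !zt.
by move=> v l cv l0; rewrite !zt //; exact: convex_scale.
Qed.

Theorem theorem5p4 (R : realType) (n : nat)
    (z : ({ptws 'rV[R]_n -> R}) -> 'rV[R]_n) :
  ((is_continuous_on_Conv z /\ dually_translation_covariant z /\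
    vertically_translation_invariant z /\ is_valuation z /\ homogeneous0 z)
   <-> exists t : 'rV[R]_n, forall v, convex_fun v -> z v = t)
  /\
  ((2 <= n)%N ->
   (is_continuous_on_Conv z /\ dually_translation_covariant z /\
    vertically_translation_invariant z /\ is_valuation z /\ homogeneous0 z /\
    rotation_equivariant z)
   <-> (forall v, convex_fun v -> z v = 0))
  /\
  (n = 1%N ->
   (is_continuous_on_Conv z /\ dually_translation_covariant z /\
    vertically_translation_invariant z /\ is_valuation z /\ homogeneous0 z /\
    reflection_equivariant z)
   <-> (forall v, convex_fun v -> z v = 0)).
Proof.
split; first exact: part1.
split.
  move=> n2; split.
    move=> [zc [_ [_ [_ [zh zr]]]]] v cv.
    rewrite (@const0 R n z zc zh v cv).
    apply/rowP => i; rewrite mxE.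
    set t := z (fun _ => 0).
    pose j : 'I_n := if val i == 0%N then Ordinal n2 else Ordinal (ltnW n2).
    have ji : j != i.
      rewrite /j; case: ifP => /eqP h; apply/eqP => e; move: h; rewrite -e //=.
    pose d : 'rV[R]_n := \row_k (if (k == i) || (k == j) then -1 else 1).
    have rot : is_rotation (diag_mx d).
      split.
        rewrite tr_diag_mx mulmx_diag -diag_const_mx; congr diag_mx.
        apply/rowP => k; rewrite !mxE; case: ifP => _; ring.
      rewrite det_diag (bigD1 i) //= (bigD1 j) /=; last by rewrite ji.
      rewrite big1 ?mxE ?eqxx ?orbT ?mulr1 ?mulrNN ?mulr1 //.
      by move=> k /andP [ki kj]; rewrite mxE (negbTE ki) (negbTE kj).
    have := zr _ _ (convex0 R n) rot.
    rewrite -/t tr_diag_mx mul_mx_diag => /rowP /(_ i); rewrite !mxE eqxx /=.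
    move=> h; have : t 0 i * 2 = 0 by rewrite mulr_natr mulr2n {1}h; ring.
    by move/eqP; rewrite mulf_eq0 pnatr_eq0 orbF => /eqP.
  move=> z0.
  have [_ h1] := @part1 R n z.
  have [zc [zd [zv [zval zh]]]] := h1 (ex_intro _ 0 z0).
  do 5 (split => //).
  move=> v th cv _; rewrite !z0 ?mul0mx //; exact: convex_lin.
move=> n1; split.
  move=> [zc [_ [_ [_ [zh zr]]]]] v cv.
  rewrite (@const0 R n z zc zh v cv).
  have := zr _ (convex0 R n).
  set t := z (fun _ => 0) => h.
  have : t *+ 2 = 0 by rewrite mulr2n {1}h addNr.
  by move/eqP; rewrite -scaler_nat scaler_eq0 pnatr_eq0 /= => /eqP.
move=> z0.
have [_ h1] := @part1 R n z.
have [zc [zd [zv [zval zh]]]] := h1 (ex_intro _ 0 z0).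
do 5 (split => //).
move=> v cv; rewrite !z0 ?oppr0 //; exact: convex_neg.
Qed.
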